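(* Let $X$ be a finite connected poset of length $1$. If $|\mathrm{Min}(X)|>1$ and $|\mathrm{Max}(X)|>1$, then there are two disjoint maximal chains $C,D$ in $X$.
   Context: The length of $X$ is the maximum of $|C|-1$ over chains $C\subseteq X$. $\mathrm{Min}(X)$ and $\mathrm{Max}(X)$ are the sets of minimal and maximal elements of $X$. $X$ is connected if any two elements are joined by a sequence of elements with consecutive ones comparable. *)

(* Defs.v *)
From mathcomp Require Import all_boot all_order.
Set Implicit Arguments. Unset Strict Implicit. Unset Printing Implicit Defensive.
Import Order.Theory.
Local Open Scope order_scope.

Definition is_chain d (T : finPOrderType d) (C : {set T}) : bool :=
  [forall x in C, forall y in C, x >=< y].

Definition is_maximal_chain d (T : finPOrderType d) (C : {set T}) : bool :=
  is_chain C && [forall D : {set T}, (is_chain D && (C \subset D)) ==> (D == C)].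

Definition poset_length d (T : finPOrderType d) : nat :=
  \max_(C : {set T} | is_chain C) (#|C|.-1).

Definition minset_el d (T : finPOrderType d) : {set T} :=
  [set x : T | [forall y : T, (y <= x) ==> (y == x)]].
Definition maxset_el d (T : finPOrderType d) : {set T} :=
  [set x : T | [forall y : T, (x <= y) ==> (y == x)]].

Definition poset_connected d (T : finPOrderType d) : Prop :=
  forall x y : T, connect (fun a b : T => a >=< b) x y.

(* Main.v *)
Require Import Defs.
From mathcomp Require Import all_boot all_order.
Import Order.Theory.

Section Helpers.
Local Open Scope order_scope.
Variables (d : Order.disp_t) (T : finPOrderType d).

Lemma cmp_le {x y : T} : x <= y -> x >=< y.
Proof. by rewrite /Order.comparable => ->. Qed.
Lemma cmp_ge {x y : T} : y <= x -> x >=< y.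
Proof. by rewrite /Order.comparable => ->; rewrite orbT. Qed.

Lemma no3 (hl : poset_length T = 1) {x y z : T} : x < y -> y < z -> False.
Proof.
move=> hxy hyz; have hxz := lt_trans hxy hyz.
have: (#|[set x; y; z]|.-1 <= poset_length T)%N.
  apply: (leq_bigmax_cond (F := fun C : {set T} => #|C|.-1)).
  apply/forall_inP => u; rewrite !inE => /orP[/orP[]|]/eqP->;
  apply/forall_inP => v; rewrite !inE => /orP[/orP[]|]/eqP->;
  first [ apply: cmp_le; by rewrite ?lexx ?(ltW hxy) ?(ltW hyz) ?(ltW hxz)
        | apply: cmp_ge; by rewrite ?lexx ?(ltW hxy) ?(ltW hyz) ?(ltW hxz)].
by rewrite hl setUC cardsU1 cards2 !inE (gt_eqF hxz) (gt_eqF hyz) (lt_eqF hxy).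
Qed.

Lemma edge_max (hl : poset_length T = 1) {x y : T} : x < y ->
  is_maximal_chain [set x; y].
Proof.
move=> hxy.
have hch : is_chain [set x; y].
  apply/forall_inP => u; rewrite !inE => /orP[]/eqP->;
  apply/forall_inP => v; rewrite !inE => /orP[]/eqP->;
  first [ apply: cmp_le; by rewrite ?lexx ?(ltW hxy)
        | apply: cmp_ge; by rewrite ?lexx ?(ltW hxy)].
rewrite /is_maximal_chain hch /=.
apply/forallP => D; apply/implyP => /andP[hD hsub].
rewrite eqEsubset hsub andbT.
apply/subsetP => z zD.
have xD : x \in D by apply: (subsetP hsub); rewrite !inE eqxx.
have yD : y \in D by apply: (subsetP hsub); rewrite !inE eqxx orbT.
have czx : z >=< x by move/forall_inP: hD => /(_ z zD)/forall_inP/(_ x xD).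
have czy : z >=< y by move/forall_inP: hD => /(_ z zD)/forall_inP/(_ y yD).
rewrite !inE; case: (eqVneq z x) => [//|nzx]; case: (eqVneq z y) => [//|nzy] /=.
exfalso.
case/orP: czx => [hzx | hxz].
  have : z < x by rewrite lt_def eq_sym nzx hzx.
  move=> h; exact: (no3 hl h hxy).
have hxz' : x < z by rewrite lt_def nzx hxz.
case/orP: czy => [hzy | hyz].
  have hzy' : z < y by rewrite lt_def eq_sym nzy hzy.
  exact: (no3 hl hxz' hzy').
have hyz' : y < z by rewrite lt_def nzy hyz.
exact: (no3 hl hxy hyz').
Qed.

Lemma iso_max {x : T} : (forall y, x >=< y -> y = x) -> is_maximal_chain [set x].
Proof.
move=> hiso.
have hch : is_chain [set x].
  apply/forall_inP => u; rewrite !inE => /eqP->;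
  apply/forall_inP => v; rewrite !inE => /eqP->; exact: comparablexx.
rewrite /is_maximal_chain hch /=.
apply/forallP => D; apply/implyP => /andP[hD hsub].
rewrite eqEsubset hsub andbT.
apply/subsetP => z zD.
have xD : x \in D by apply: (subsetP hsub); rewrite !inE eqxx.
have : x >=< z by move/forall_inP: hD => /(_ x xD)/forall_inP/(_ z zD).
by move/hiso => ->; rewrite inE.
Qed.

Lemma disj2 (hl : poset_length T = 1) {x y u v : T} : x < y -> u < v ->
  x != u -> y != v -> [disjoint [set x; y] & [set u; v]].
Proof.
move=> hxy huv nxu nyv.
rewrite disjoint_subset; apply/subsetP => w; rewrite !inE.
move=> /orP[]/eqP->; apply/negP => /orP[]/eqP E.
- by rewrite E eqxx in nxu.
- by subst x; exact: (no3 hl huv hxy).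
- by subst y; exact: (no3 hl hxy huv).
- by rewrite E eqxx in nyv.
Qed.

Lemma disj1 {x y u : T} : x < y -> (forall z, u >=< z -> z = u) ->
  [disjoint [set x; y] & [set u]].
Proof.
move=> hxy hiso.
rewrite disjoint_subset; apply/subsetP => w; rewrite !inE.
move=> /orP[]/eqP->; apply/negP => /eqP E; subst u.
- by move: (hiso y (cmp_le (ltW hxy))) => E; rewrite E ltxx in hxy.
- by move: (hiso x (cmp_ge (ltW hxy))) => E; rewrite E ltxx in hxy.
Qed.

Lemma edge_exists (hl : poset_length T = 1) : exists x y : T, x < y.
Proof.
case: (boolP [exists x : T, exists y : T, x < y]).
  by move=> /existsP[x /existsP[y h]]; exists x, y.
rewrite negb_exists => /forallP hn; exfalso.
have : (poset_length T <= 0)%N.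
  apply/bigmax_leqP => C hC.
  rewrite leqn0 -subn1 subn_eq0; apply/card_le1_eqP => a b aC bC.
  have : a >=< b by move/forall_inP: hC => /(_ a aC)/forall_inP/(_ b bC).
  move: (hn a); rewrite negb_exists => /forallP/(_ b) nab.
  move: (hn b); rewrite negb_exists => /forallP/(_ a) nba.
  case/orP => h.
    by move: nab; rewrite lt_def h andbT negbK => /eqP->.
  by move: nba; rewrite lt_def h andbT negbK => /eqP->.
by rewrite hl.
Qed.

Lemma two_el (A : {set T}) (a : T) : (1 < #|A|)%N -> exists2 x, x \in A & x != a.
Proof.
move=> h; case: (boolP [exists x in A, x != a]).
  by case/exists_inP => x xA nxa; exists x.
rewrite negb_exists_in => /forall_inP hA.
have: A \subset [set a].
  by apply/subsetP => x xA; rewrite inE; move: (hA x xA); rewrite negbK.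
by move/subset_leq_card; rewrite cards1 leqNgt h.
Qed.

Lemma iso_or (x : T) :
  (forall y, x >=< y -> y = x) \/ exists2 y, y != x & x >=< y.
Proof.
case: (boolP [exists y, (y != x) && (x >=< y)]).
  by case/existsP => y /andP[h1 h2]; right; exists y.
rewrite negb_exists => /forallP hn; left => y hc.
by move: (hn y); rewrite hc andbT negbK => /eqP.
Qed.

Lemma main_aux :
  poset_length T = 1 ->
  (1 < #|minset_el T|)%N ->
  (1 < #|maxset_el T|)%N ->
  exists C D : {set T},
    [/\ is_maximal_chain C, is_maximal_chain D & [disjoint C & D]].
Proof.
move=> hl hmin hmax.
have [a [b hab]] := edge_exists hl.
have [m hm nma] := @two_el _ a hmin.
case: (iso_or m) => [hiso | [y nym cmy]].
  by exists [set a; b], [set m]; split; [exact: edge_max | exact: iso_max | exact: disj1].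
have hmy : m < y.
  case/orP: cmy => h; first by rewrite lt_def nym h.
  by move: hm; rewrite inE => /forallP/(_ y); rewrite h /= (negbTE nym).
case: (eqVneq y b) => [eyb | nyb].
  subst y.
  have [M hM nMb] := @two_el _ b hmax.
  case: (iso_or M) => [hiso | [z nzM czM]].
    by exists [set a; b], [set M]; split; [exact: edge_max | exact: iso_max | exact: disj1].
  have hzM : z < M.
    case/orP: czM => h; last by rewrite lt_def eq_sym nzM h.
    by move: hM; rewrite inE => /forallP/(_ z); rewrite h /= (negbTE nzM).
  case: (eqVneq z a) => [eza | nza].
    subst z.
    exists [set m; b], [set a; M]; split; [exact: edge_max | exact: edge_max |].
    by apply: disj2; rewrite // eq_sym.
  exists [set a; b], [set z; M]; split; [exact: edge_max | exact: edge_max |].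
  by apply: disj2; rewrite // eq_sym.
exists [set a; b], [set m; y]; split; [exact: edge_max | exact: edge_max |].
by apply: disj2; rewrite // eq_sym.
Qed.

End Helpers.

Theorem lemma4p5 (d : Order.disp_t) (T : finPOrderType d) :
  poset_connected T ->
  poset_length T = 1 ->
  1 < #|minset_el T| ->
  1 < #|maxset_el T| ->
  exists C D : {set T},
    [/\ is_maximal_chain C, is_maximal_chain D & [disjoint C & D]].
Proof. by move=> _; exact: main_aux. Qed.
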